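(* Let $\delta>0$ and $\beta:[0,+\infty)\to(0,+\infty)$ continuously differentiable, strictly decreasing, with $\lim_{S\to+\infty}\beta(S)=0$, and $\delta<\beta(0)$. Let $\chi:[0,+\infty)\to(-\infty,0]$, $\chi(y)=y\beta'(y)$, and assume (H$_1$) $\chi$ is decreasing on $[0,\beta^{-1}(\delta)]$; (H$_2$) $\chi(\beta^{-1}(\delta))<-4\delta$. Then there exists a unique $\tau^*\in(0,\bar\tau)$ such that, for $\tau\in[0,\bar\tau)$, the inequality $$\frac{4\delta e^{-\delta\tau}}{2e^{-\delta\tau}-1}+(2e^{-\delta\tau}-1)\,\chi\!\left(\beta^{-1}\!\Big(\frac{\delta}{2e^{-\delta\tau}-1}\Big)\right)<0$$ holds if and only if $\tau\in[0,\tau^* )$.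
   Context: $\bar\tau:=\frac1\delta\ln\!\big(\frac{2\beta(0)}{\delta+\beta(0)}\big)$; $\beta^{-1}:(0,\beta(0)]\to[0,\infty)$ is the inverse function of $\beta$. For $\tau\in[0,\bar\tau)$ one has $2e^{-\delta\tau}-1>0$ and $\delta\le \frac{\delta}{2e^{-\delta\tau}-1}<\beta(0)$. *)

(* Defs.v *)
From Stdlib Require Import Reals.
Open Scope R_scope.

Definition right_deriv_lim (f : R -> R) (x l : R) : Prop :=
  forall eps : R, 0 < eps -> exists delta : R, 0 < delta /\
    forall h : R, 0 < h < delta -> Rabs ((f (x + h) - f x) / h - l) < eps.

Definition deriv_on_nonneg (f f' : R -> R) : Prop :=
  right_deriv_lim f 0 (f' 0) /\
  forall y : R, 0 < y -> derivable_pt_lim f y (f' y).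

(* g continuous on [0,+oo) (relative to [0,+oo)). *)
Definition cont_on_nonneg (g : R -> R) : Prop :=
  forall y : R, 0 <= y -> continuity_pt (fun z => g (Rmax 0 z)) y.

Definition tau_bar (beta : R -> R) (delta : R) : R :=
  / delta * ln (2 * beta 0 / (delta + beta 0)).

(* The expression of the lemma, with chi y = y * beta'(y), binv = beta^{-1}. *)
Definition lhs5 (beta' binv : R -> R) (delta tau : R) : R :=
  let q := 2 * exp (- delta * tau) - 1 in
  4 * delta * exp (- delta * tau) / q
  + q * ((fun y => y * beta' y) (binv (delta / q))).

(* Main.v *)
Require Import Defs.
From Stdlib Require Import Reals Lra Classical.
Open Scope R_scope.

Lemma cont_ext (f : R -> R) (x eps : R) : continuity_pt f x -> 0 < eps ->
  exists a, 0 < a /\ forall z, Rabs (z - x) < a -> Rabs (f z - f x) < eps.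
Proof.
  intros Hc He. destruct (Hc eps He) as [a [Ha Hz]]. exists a. split; [lra|].
  intros z Hzx. destruct (Req_dec z x) as [->|Hne].
  - unfold Rminus. rewrite Rplus_opp_r, Rabs_R0. lra.
  - apply (Hz z). split. split; [exact I| auto]. simpl. unfold R_dist. exact Hzx.
Qed.

Theorem lemma5p2 (delta : R) (beta beta' binv : R -> R)
  (Hdelta : 0 < delta)
  (Hpos : forall S, 0 <= S -> 0 < beta S)
  (Hder : deriv_on_nonneg beta beta')
  (Hcont : cont_on_nonneg beta')
  (Hdec : forall x y, 0 <= x -> x < y -> beta y < beta x)
  (Hlim : forall eps, 0 < eps -> exists M, forall S, M <= S -> Rabs (beta S) < eps)
  (Hdb : delta < beta 0)
  (Hinv : forall y, 0 < y <= beta 0 -> 0 <= binv y /\ beta (binv y) = y)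
  (H1 : forall x y, 0 <= x -> x <= y -> y <= binv delta ->
          y * beta' y <= x * beta' x)
  (H2 : binv delta * beta' (binv delta) < -4 * delta) :
  exists tau_star : R,
    (0 < tau_star < tau_bar beta delta /\
     forall tau, 0 <= tau < tau_bar beta delta ->
       (lhs5 beta' binv delta tau < 0 <-> tau < tau_star)) /\
    (forall t', 0 < t' < tau_bar beta delta ->
       (forall tau, 0 <= tau < tau_bar beta delta ->
          (lhs5 beta' binv delta tau < 0 <-> tau < t')) -> t' = tau_star).
Proof.
  set (tB := tau_bar beta delta).
  set (bz := beta 0) in *.
  assert (Hb0 : 0 < bz) by (apply Hpos; lra).
  assert (Hnoninc : forall x y, 0 <= x -> x <= y -> beta y <= beta x).
  { intros x y Hx Hxy. destruct (Req_dec x y) as [->|Hne]; [lra|]. left; apply Hdec; lra. }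
  assert (Hbinv_mono : forall a b, 0 < a -> a <= b -> b <= bz -> binv b <= binv a).
  { intros a b Ha Hab Hb. destruct (Hinv a) as [Ha0 Haa]; [unfold bz in *; lra|].
    destruct (Hinv b) as [Hb0' Hbb]; [unfold bz in *; lra|].
    destruct (Rle_dec (binv b) (binv a)) as [|Hn]; auto. exfalso. apply Rnot_le_lt in Hn.
    pose proof (Hdec _ _ Ha0 Hn). lra. }
  set (P := fun s => 2 * s * (delta + s) / delta).
  set (F := fun s => P s + binv s * beta' (binv s)).
  set (chit := fun z => z * beta' (Rmax 0 z)).
  assert (Hchit : forall z, 0 <= z -> chit z = z * beta' z).
  { intros z Hz. unfold chit. rewrite Rmax_right; auto. }
  assert (Hchitc : forall y, 0 <= y -> continuity_pt chit y).
  { intros y Hy. exact (continuity_pt_mult id (fun z => beta' (Rmax 0 z)) y (derivable_continuous_pt id y (derivable_pt_id y)) (Hcont y Hy)). }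
  assert (HPc : forall y, continuity_pt P y).
  { intros y. unfold P. reg. }
  assert (HPmono : forall a b, 0 < a < b -> P a < P b).
  { intros a b Hab. unfold P, Rdiv. apply Rmult_lt_compat_r.
    apply Rinv_0_lt_compat; lra. nra. }
  assert (HP4 : P delta = 4 * delta). { unfold P. field. lra. }
  assert (HFmono : forall a b, delta <= a -> a < b -> b <= bz -> F a < F b).
  { intros a b Ha Hab Hb. unfold F.
    destruct (Hinv a) as [Ha0 _]; [unfold bz in *; lra|].
    destruct (Hinv b) as [Hb0' _]; [unfold bz in *; lra|].
    assert (binv a * beta' (binv a) <= binv b * beta' (binv b)) by
      (apply H1; first [lra | apply Hbinv_mono; lra]).
    pose proof (HPmono a b ltac:(lra)). lra. }
  assert (HFd : F delta < 0). { unfold F. rewrite HP4. lra. }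
  assert (Htb : exp (- delta * tB) = (delta + bz) / (2 * bz)).
  { unfold tB, tau_bar. fold bz.
    replace (- delta * (/ delta * ln (2 * bz / (delta + bz)))) with (- ln (2*bz/(delta+bz))) by (field; lra).
    rewrite exp_Ropp, exp_ln. field. lra.
    apply Rdiv_lt_0_compat; lra. }
  set (q := fun t => 2 * exp (- delta * t) - 1).
  set (s := fun t => delta / q t).
  assert (Hq : forall t, 0 <= t < tB -> delta / bz < q t <= 1).
  { intros t [Ht0 Ht1]. unfold q. split.
    - assert (exp (-delta*tB) < exp (-delta*t)) by (apply exp_increasing; nra).
      rewrite Htb in H.
      replace (delta / bz) with (2 * ((delta + bz) / (2 * bz)) - 1) by (field; lra). lra.
    - destruct (Req_dec t 0) as [->|Hne].
      + rewrite Rmult_0_r, exp_0. lra.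
      + assert (exp (-delta*t) < exp 0) by (apply exp_increasing; nra).
        rewrite exp_0 in H. lra. }
  assert (Hqpos : forall t, 0 <= t < tB -> 0 < q t).
  { intros t Ht. pose proof (Hq t Ht). assert (0 < delta / bz) by (apply Rdiv_lt_0_compat; lra). lra. }
  assert (Hs : forall t, 0 <= t < tB -> delta <= s t < bz).
  { intros t Ht. pose proof (Hq t Ht) as [Ha Hb]. pose proof (Hqpos t Ht) as Hp. unfold s. split.
    - apply (Rmult_le_reg_r (q t)); auto. unfold Rdiv. rewrite Rmult_assoc, Rinv_l by lra. nra.
    - apply (Rmult_lt_reg_r (q t)); auto. unfold Rdiv. rewrite Rmult_assoc, Rinv_l by lra.
      apply (Rmult_lt_compat_l bz) in Ha; auto. unfold Rdiv in Ha.
      rewrite <- Rmult_assoc, (Rmult_comm bz), Rmult_assoc, Rinv_r, Rmult_1_r in Ha; lra. }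
  assert (Hsmono : forall t1 t2, 0 <= t1 -> t1 < t2 -> t2 < tB -> s t1 < s t2).
  { intros t1 t2 H0 H12 H2'. 
    assert (Hq1 := Hqpos t1 ltac:(lra)). assert (Hq2 := Hqpos t2 ltac:(lra)).
    assert (q t2 < q t1).
    { unfold q. assert (exp (-delta*t2) < exp (-delta*t1)) by (apply exp_increasing; nra). lra. }
    unfold s, Rdiv. apply Rmult_lt_compat_l; auto. apply Rinv_lt_contravar; nra. }
  assert (Hsinv : forall x, delta <= x < bz -> exists t, 0 <= t < tB /\ s t = x).
  { intros x Hx. set (k := (delta + x) / (2 * x)).
    assert (Hk : 0 < k) by (apply Rdiv_lt_0_compat; lra).
    exists (- ln k / delta).
    assert (He : exp (- delta * (- ln k / delta)) = k).
    { replace (- delta * (- ln k / delta)) with (ln k) by (field; lra). apply exp_ln; auto. }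
    assert (Hk1 : k <= 1). { unfold k. apply (Rmult_le_reg_r (2*x)); [lra|]. unfold Rdiv.
      rewrite Rmult_assoc, Rinv_l by lra. lra. }
    assert (Hk2 : (delta + bz) / (2 * bz) < k).
    { unfold k. apply (Rmult_lt_reg_r (2*x * (2*bz))); [nra|]. unfold Rdiv.
      replace ((delta + bz) * / (2 * bz) * (2 * x * (2 * bz))) with ((delta+bz)*(2*x)) by (field; lra).
      replace ((delta + x) * / (2 * x) * (2 * x * (2 * bz))) with ((delta+x)*(2*bz)) by (field; lra).
      nra. }
    split; [split|].
    - destruct (Rle_dec 0 (- ln k / delta)) as [|Hn]; auto. exfalso.
      assert (exp 0 < exp (- delta * (- ln k / delta))) by (apply exp_increasing; apply Rnot_le_lt in Hn; nra).
      rewrite He, exp_0 in H. lra.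
    - destruct (Rlt_dec (- ln k / delta) tB) as [|Hn]; auto. exfalso. apply Rnot_lt_le in Hn.
      destruct Hn as [Hn|Hn].
      + assert (exp (- delta * (- ln k / delta)) < exp (- delta * tB)) by (apply exp_increasing; nra).
        rewrite He, Htb in H. lra.
      + rewrite <- Hn, Htb in He. lra.
    - unfold s, q. rewrite He. unfold k. field. lra. }
  assert (Hid : forall t, 0 <= t < tB -> (lhs5 beta' binv delta t < 0 <-> F (s t) < 0)).
  { intros t Ht. pose proof (Hqpos t Ht) as Hp.
    assert (E : lhs5 beta' binv delta t = q t * F (s t)).
    { unfold lhs5, F, P, s, q. cbv zeta. unfold q in Hp.
      set (u := exp (- delta * t)) in *. set (X := binv (delta / (2 * u - 1)) * beta' (binv (delta / (2 * u - 1)))).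
      field. lra. }
    rewrite E. split; intro H; nra. }
  assert (Hrc : forall s0, delta <= s0 < bz -> F s0 < 0 -> exists s1, s0 < s1 < bz /\ F s1 < 0).
  { intros s0 Hs0 HF.
    destruct (Hinv s0) as [Hy0 Hby0]; [unfold bz in *; lra|].
    set (y0 := binv s0) in *.
    assert (Hy0p : 0 < y0).
    { destruct Hy0 as [|He]; auto. rewrite <- He in Hby0. fold bz in Hby0. lra. }
    set (eps := - F s0 / 3).
    assert (Heps : 0 < eps) by (unfold eps; lra).
    destruct (cont_ext chit y0 eps (Hchitc y0 Hy0) Heps) as [eta [Heta Hceta]].
    destruct (cont_ext P s0 eps (HPc s0) Heps) as [al [Hal Hcal]].
    set (x0 := y0 - Rmin y0 eta / 2).
    assert (Hm1 : 0 < Rmin y0 eta) by (apply Rmin_glb_lt; auto).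
    assert (Hm2 := Rmin_l y0 eta). assert (Hm3 := Rmin_r y0 eta).
    assert (Hx0 : 0 < x0 < y0) by (unfold x0; lra).
    assert (Hbx0 : s0 < beta x0) by (rewrite <- Hby0; apply Hdec; lra).
    set (h := Rmin (Rmin al (beta x0 - s0)) (bz - s0) / 2).
    assert (Hh1 : 0 < Rmin (Rmin al (beta x0 - s0)) (bz - s0)) by
      (apply Rmin_glb_lt; [apply Rmin_glb_lt|]; lra).
    assert (Hh2 := Rmin_l (Rmin al (beta x0 - s0)) (bz - s0)).
    assert (Hh3 := Rmin_r (Rmin al (beta x0 - s0)) (bz - s0)).
    assert (Hh4 := Rmin_l al (beta x0 - s0)). assert (Hh5 := Rmin_r al (beta x0 - s0)).
    exists (s0 + h). split; [unfold h; lra|].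
    destruct (Hinv (s0 + h)) as [Hz0 Hbzpos]; [unfold h, bz in *; lra|].
    assert (Hzy : binv (s0 + h) <= y0) by (apply Hbinv_mono; unfold h in *; lra).
    assert (Hzx : x0 < binv (s0 + h)).
    { destruct (Rlt_dec x0 (binv (s0 + h))) as [|Hn]; auto. exfalso. apply Rnot_lt_le in Hn.
      pose proof (Hnoninc _ _ Hz0 Hn). unfold h in *. lra. }
    assert (A1 : Rabs (chit (binv (s0 + h)) - chit y0) < eps).
    { apply Hceta. apply Rabs_def1; unfold x0 in *; lra. }
    assert (A2 : Rabs (P (s0 + h) - P s0) < eps).
    { apply Hcal. apply Rabs_def1; unfold h in *; lra. }
    apply Rabs_def2 in A1. apply Rabs_def2 in A2.
    rewrite (Hchit _ Hz0), (Hchit _ Hy0) in A1.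
    unfold F. unfold F in eps. fold y0 in eps. unfold eps in *. lra. }
  assert (Hpp : exists s1, delta <= s1 < bz /\ 0 < F s1).
  { assert (H4 : 0 < 4 * delta) by lra.
    destruct (cont_ext chit 0 (4*delta) (Hchitc 0 (Rle_refl 0)) H4) as [eta [Heta Hc]].
    assert (Hc0 : chit 0 = 0) by (unfold chit; ring).
    set (m := Rmax (beta (eta/2)) delta).
    assert (Hbe : beta (eta/2) < bz) by (apply Hdec; lra).
    assert (Hm : m < bz) by (apply Rmax_lub_lt; lra).
    assert (Hml := Rmax_l (beta (eta/2)) delta). assert (Hmr := Rmax_r (beta (eta/2)) delta).
    exists ((m + bz)/2). split; [unfold m in *; lra|].
    destruct (Hinv ((m + bz)/2)) as [Hz0 Hbzpos]; [unfold m, bz in *; lra|].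
    assert (Hz : binv ((m+bz)/2) < eta/2).
    { destruct (Rlt_dec (binv ((m+bz)/2)) (eta/2)) as [|Hn]; auto. exfalso. apply Rnot_lt_le in Hn.
      pose proof (Hnoninc (eta/2) _ ltac:(lra) Hn). unfold m in *. lra. }
    assert (A : Rabs (chit (binv ((m + bz)/2)) - chit 0) < 4 * delta).
    { apply Hc. apply Rabs_def1; lra. }
    rewrite Hc0, Rminus_0_r, (Hchit _ Hz0) in A. apply Rabs_def2 in A.
    pose proof (HPmono delta ((m+bz)/2) ltac:(unfold m in *; lra)).
    unfold F. lra. }
  assert (Hmonot : forall t1 t2, 0 <= t1 -> t1 < t2 -> t2 < tB -> F (s t1) < F (s t2)).
  { intros t1 t2 Ha Hb Hc. apply HFmono.
    - apply (Hs t1); lra.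
    - apply Hsmono; auto.
    - left; apply (Hs t2); lra. }
  destruct Hpp as [sp [Hsp HFsp]].
  destruct (Hsinv sp Hsp) as [t1 [Ht1 Hst1]].
  assert (Hrct : forall t, 0 <= t < tB -> F (s t) < 0 -> exists t', t < t' < tB /\ F (s t') < 0).
  { intros t Ht HF. destruct (Hrc (s t) (Hs t Ht) HF) as [s1 [Hs1 HF1]].
    destruct (Hsinv s1 ltac:(pose proof (Hs t Ht); lra)) as [t' [Ht' Hst']].
    exists t'. split; [split|]; try lra.
    - destruct (Rlt_dec t t') as [|Hn]; auto. exfalso. apply Rnot_lt_le in Hn.
      destruct Hn as [Hn|Hn].
      + pose proof (Hsmono t' t ltac:(lra) Hn ltac:(lra)). lra.
      + subst. lra.
    - rewrite Hst'. auto. }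
  set (E := fun t => (0 <= t < tB) /\ F (s t) < 0).
  assert (Hs0 : s 0 = delta).
  { unfold s, q. rewrite Rmult_0_r, exp_0. field. }
  assert (HE0 : E 0) by (unfold E; rewrite Hs0; split; [lra|auto]).
  assert (Hub : is_upper_bound E t1).
  { intros e [He HFe]. destruct (Rle_dec e t1) as [|Hn]; auto. exfalso. apply Rnot_le_lt in Hn.
    pose proof (Hmonot t1 e ltac:(lra) Hn ltac:(lra)). rewrite Hst1 in H. lra. }
  destruct (completeness E (ex_intro _ t1 Hub) (ex_intro _ 0 HE0)) as [m [Hm1 Hm2]].
  assert (Hmt1 : m <= t1) by (apply Hm2; auto).
  assert (Hmpos : 0 < m).
  { destruct (Hrct 0 ltac:(lra) ltac:(rewrite Hs0; auto)) as [t' [Ht' HF']].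
    assert (E t') by (split; [lra|auto]). pose proof (Hm1 t' H). lra. }
  assert (Hchar : forall t, 0 <= t < tB -> (F (s t) < 0 <-> t < m)).
  { intros t Ht. split; intro H.
    - assert (Et : E t) by (split; auto). pose proof (Hm1 t Et).
      destruct H0 as [|He]; auto. exfalso. subst t.
      destruct (Hrct m Ht H) as [t' [Ht' HF']].
      assert (E t') by (split; [lra|auto]). pose proof (Hm1 t' H0). lra.
    - destruct (classic (exists e, E e /\ t < e)) as [[e [[He HFe] Hte]]|Hn].
      + pose proof (Hmonot t e ltac:(lra) Hte ltac:(lra)). lra.
      + exfalso. assert (is_upper_bound E t).
        { intros x Ex. destruct (Rle_dec x t) as [|Hl]; auto. exfalso. apply Hn. exists x.
          split; auto. lra. }
        pose proof (Hm2 t H0). lra. }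
  exists m. split.
  - split; [lra|]. intros tau Htau. rewrite (Hid tau Htau). apply Hchar; auto.
  - intros t' Ht' Hp. destruct (Rtotal_order t' m) as [Hl|[He|Hg]]; auto; exfalso.
    + assert (Ht : 0 <= (t'+m)/2 < tB) by lra.
      pose proof (proj2 (Hchar _ Ht) ltac:(lra)) as HF.
      apply (Hid _ Ht) in HF. apply (Hp _ Ht) in HF. lra.
    + assert (Ht : 0 <= (t'+m)/2 < tB) by lra.
      pose proof (proj2 (Hp _ Ht) ltac:(lra)) as HF.
      apply (Hid _ Ht) in HF. apply (Hchar _ Ht) in HF. lra.
Qed.
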